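(* Let $F$ be a field of characteristic $\neq 2,3$, $C$ a Cayley–Dickson algebra over $F$ and $\gamma_1,\gamma_2,\gamma_3 \in F\setminus\{0\}$. Then the Jordan algebra $H(C_3,*_\gamma)$ has no nonzero derivation $d$ such that every value $d(x)$ is invertible or zero; i.e. $H(C_3,*_\gamma)$ admits no derivation with invertible values.
   Context: $C$ carries its standard involution $c\mapsto \bar c$, with norm $n$ and trace $t$. $C_3$ is the algebra of $3\times3$ matrices over $C$; for $X\in C_3$, $\bar X^T$ denotes the matrix obtained by transposing and applying $\bar{\ }$ to every entry. With $\gamma = \mathrm{diag}(\gamma_1,\gamma_2,\gamma_3)$, the involution $*_\gamma$ is $X^{*_\gamma} = \gamma^{-1}\bar X^T\gamma$, and $H(C_3,*_\gamma)=\{X: X^{*_\gamma}=X\}$ with product $X\circ Y = \tfrac12(XY+YX)$, a simple exceptional Jordan algebra. An element $x$ of a unital Jordan algebra $J$ is invertible if there exists $y\in J$ with $xy=1$, $x^2y=x$. A derivation with invertible values of $J$ is a nonzero derivation $d$ of $J$ such that for every $x \in J$, $d(x)$ is either invertible or equal to $0$. *)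

(* Defs.v *)
From HB Require Import structures.
From mathcomp Require Import all_boot all_order all_algebra.
Set Implicit Arguments. Unset Strict Implicit. Unset Printing Implicit Defensive.
Import GRing.Theory.
Local Open Scope ring_scope.

(* An F-vector space with a (not necessarily associative) bilinear product
   and an involution, given by explicit operations. *)
Record cda (F : fieldType) := CDA {
  cT : Type;
  c0 : cT;
  c1 : cT;
  cadd : cT -> cT -> cT;
  copp : cT -> cT;
  cmul : cT -> cT -> cT;
  cconj : cT -> cT;
  cscale : F -> cT -> cT }.

Definition cd_base (F : fieldType) : cda F :=
  @CDA F F 0 1 +%R (fun x => - x) *%R id *%R.

(* Cayley-Dickson doubling with parameter g (Schafer's convention):
   (a,b)(c,d) = (ac + g d^- b, d a + b c^-),   (a,b)^- = (a^-, -b). *)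
Definition cd_double (F : fieldType) (A : cda F) (g : F) : cda F :=
  @CDA F (cT A * cT A)
    (c0 A, c0 A) (c1 A, c0 A)
    (fun x y => (cadd x.1 y.1, cadd x.2 y.2))
    (fun x => (copp x.1, copp x.2))
    (fun x y => (cadd (cmul x.1 y.1) (cscale g (cmul (cconj y.2) x.2)),
                 cadd (cmul y.2 x.1) (cmul x.2 (cconj y.1))))
    (fun x => (cconj x.1, copp x.2))
    (fun a x => (cscale a x.1, cscale a x.2)).

(* The Cayley-Dickson (octonion) algebra C = CD(F; a, b, c), a b c nonzero. *)
Definition cayley_dickson (F : fieldType) (a b c : F) : cda F :=
  cd_double (cd_double (cd_double (cd_base F) a) b) c.

Definition mx3 (F : fieldType) (C : cda F) := 'I_3 -> 'I_3 -> cT C.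

Definition o0 : 'I_3 := @Ordinal 3 0 isT.
Definition o1 : 'I_3 := @Ordinal 3 1 isT.
Definition o2 : 'I_3 := @Ordinal 3 2 isT.

Section Mx.
Variables (F : fieldType) (C : cda F).

Definition mx0 : mx3 C := fun _ _ => c0 C.
Definition mx1 : mx3 C := fun i j => if i == j then c1 C else c0 C.
Definition mxadd (X Y : mx3 C) : mx3 C := fun i j => cadd (X i j) (Y i j).
Definition mxscale (a : F) (X : mx3 C) : mx3 C := fun i j => cscale a (X i j).
Definition mxmul (X Y : mx3 C) : mx3 C := fun i j =>
  cadd (cmul (X i o0) (Y o0 j)) (cadd (cmul (X i o1) (Y o1 j)) (cmul (X i o2) (Y o2 j))).

Definition jmul (X Y : mx3 C) : mx3 C :=
  mxscale (2%:R)^-1 (mxadd (mxmul X Y) (mxmul Y X)).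

(* X \in H(C_3, *_gamma):  X = gamma^-1 (conj X)^T gamma, entrywise
   X i j = gamma_i^-1 gamma_j conj(X j i). *)
Definition herm (gam : 'I_3 -> F) (X : mx3 C) : Prop :=
  forall i j, X i j = cscale (gam i)^-1 (cscale (gam j) (cconj (X j i))).

Definition jinvertible (gam : 'I_3 -> F) (X : mx3 C) : Prop :=
  exists Y, herm gam Y /\ jmul X Y = mx1 /\ jmul (jmul X X) Y = X.

(* d (a function on C_3, only its restriction to J matters) is a derivation of J:
   maps J to J, is F-linear on J, and satisfies the Leibniz rule on J. *)
Definition jderivation (gam : 'I_3 -> F) (d : mx3 C -> mx3 C) : Prop :=
  (forall X, herm gam X -> herm gam (d X)) /\
  (forall X Y, herm gam X -> herm gam Y -> d (mxadd X Y) = mxadd (d X) (d Y)) /\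
  (forall a X, herm gam X -> d (mxscale a X) = mxscale a (d X)) /\
  (forall X Y, herm gam X -> herm gam Y ->
     d (jmul X Y) = mxadd (jmul (d X) Y) (jmul X (d Y))).

Definition inv_valued_derivation (gam : 'I_3 -> F) (d : mx3 C -> mx3 C) : Prop :=
  jderivation gam d /\
  (exists X, herm gam X /\ d X <> mx0) /\
  (forall X, herm gam X -> d X = mx0 \/ jinvertible gam (d X)).

End Mx.

(* Main.v *)
Require Import Defs.
From mathcomp Require Import all_boot all_order all_algebra.
From mathcomp Require Import ring.
From Stdlib Require Import FunctionalExtensionality.
Local Open Scope ring_scope.
Import GRing.Theory.

Set Implicit Arguments. Unset Strict Implicit. Unset Printing Implicit Defensive.

Lemma ord3 (i : 'I_3) : i = o0 \/ i = o1 \/ i = o2.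
Proof.
case: i => [[|[|[|n]]] Hi]; [left|right;left|right;right|]; try (by apply/val_inj).
by [].
Qed.

Section Mx.
Variables (F : fieldType) (K : cda F).
Notation T := (cT K).
Notation M := (mx3 K).
Notation h := ((2%:R : F)^-1).
Variable tau : T -> F.
Hypotheses (tau_comm : forall x y, tau (cmul x y) = tau (cmul y x))
  (tau_add : forall x y, tau (cadd x y) = tau x + tau y)
  (tau_scale : forall r x, tau (cscale r x) = r * tau x)
  (tau0 : tau (c0 K) = 0) (tau1 : tau (c1 K) = 1)
  (add0c : forall x, cadd (c0 K) x = x) (addc0 : forall x, cadd x (c0 K) = x)
  (mul0c : forall x, cmul (c0 K) x = c0 K) (mulc0 : forall x, cmul x (c0 K) = c0 K)
  (mul1c : forall x, cmul (c1 K) x = x) (mulc1 : forall x, cmul x (c1 K) = x)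
  (scalec0 : forall r, cscale r (c0 K) = c0 K) (scale0c : forall x, cscale 0 x = c0 K)
  (conj0 : cconj (c0 K) = c0 K)
  (herm1 : forall g, g != 0 -> cscale g^-1 (cscale g (cconj (c1 K))) = c1 K)
  (half_double : forall x : T, cscale h (cadd x x) = x)
  (scale_eq0 : forall r (x : T), r != 0 -> cscale r x = c0 K -> x = c0 K)
  (dbl : forall x : T, x = cadd x x -> x = c0 K)
  (c0_neq_c1 : c0 K <> c1 K)
  (h2 : (2%:R : F) != 0).

Definition E (l : 'I_3) : M := fun i j => if (i == l) && (j == l) then c1 K else c0 K.

Ltac o3 i := let H := fresh in case: (ord3 i) => [H|[H|H]]; subst i.

Lemma mulEl (X : M) l i j : mxmul (E l) X i j = if i == l then X l j else c0 K.
Proof.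
rewrite /mxmul /E; o3 i; o3 l; rewrite /= ?mul1c ?mul0c ?add0c ?addc0 //.
Qed.
Lemma mulEr (X : M) l i j : mxmul X (E l) i j = if j == l then X i l else c0 K.
Proof.
rewrite /mxmul /E; o3 j; o3 l; rewrite /= ?mulc1 ?mulc0 ?add0c ?addc0 //.
Qed.

Lemma jmulEl (X : M) l i j : jmul (E l) X i j =
  cscale h (cadd (if i == l then X l j else c0 K) (if j == l then X i l else c0 K)).
Proof. by rewrite /jmul /mxscale /mxadd mulEl mulEr. Qed.
Lemma jmulEr (X : M) l i j : jmul X (E l) i j =
  cscale h (cadd (if j == l then X i l else c0 K) (if i == l then X l j else c0 K)).
Proof. by rewrite /jmul /mxscale /mxadd mulEl mulEr. Qed.

Lemma E_idem l : jmul (E l) (E l) = E l.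
Proof.
apply: functional_extensionality => i; apply: functional_extensionality => j.
rewrite jmulEl /E.
case: (i == l); case: (j == l); rewrite ?eqxx /= ?add0c ?scalec0 ?half_double //.
Qed.

Lemma hermE gam l : (forall i, gam i != 0) -> herm gam (E l).
Proof.
move=> hg i j; rewrite /E.
case: (i =P l) => [->|_]; case: (j =P l) => [->|_]; rewrite ?eqxx /= ?conj0 ?scalec0 ?(herm1 (hg l)) //.
Qed.

Lemma arith (u v w p : F) : h * u = 1 -> h * v = 1 -> h * w = 1 ->
  u - v - w = p -> h * p = 0 -> False.
Proof.
move=> eu ev ew ep hp.
have : h * u - h * v - h * w = h * p by rewrite -ep; ring.
rewrite eu ev ew hp subrr sub0r => /eqP; rewrite oppr_eq0 oner_eq0 //.
Qed.

Definition Sf (z Y : M) i k := tau (cmul (z i k) (Y k i)).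

Lemma tau_diag (z Y : M) i : tau (jmul z Y i i) =
  h * (Sf z Y i o0 + Sf z Y i o1 + Sf z Y i o2 + (Sf z Y o0 i + Sf z Y o1 i + Sf z Y o2 i)).
Proof.
rewrite /jmul /mxscale /mxadd /mxmul /Sf tau_scale !tau_add.
rewrite (tau_comm (Y i o0)) (tau_comm (Y i o1)) (tau_comm (Y i o2)).
congr (_ * _); by rewrite !addrA.
Qed.

Lemma not_inv_tr gam (z : M) l : z l l = c0 K ->
  (forall i j, i != l -> j != l -> z i j = c0 K) -> ~ jinvertible gam z.
Proof.
move=> zll zo [Y [_ [HY _]]].
have D : forall i, h * (Sf z Y i o0 + Sf z Y i o1 + Sf z Y i o2 +
     (Sf z Y o0 i + Sf z Y o1 i + Sf z Y o2 i)) = 1.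
  by move=> i; rewrite -tau_diag HY /mx1 eqxx tau1.
have S0 : forall i k, z i k = c0 K -> Sf z Y i k = 0.
  by move=> i k e; rewrite /Sf e mul0c tau0.
o3 l.
- apply: (arith (D o0) (D o1) (D o2)
    (p := 2%:R * Sf z Y o0 o0 - 2%:R * (Sf z Y o1 o1 + Sf z Y o1 o2 + Sf z Y o2 o1 + Sf z Y o2 o2))).
    by rewrite /Sf; ring.
  by rewrite (S0 _ _ zll) !S0 ?zo // !addr0 mulr0 subrr mulr0.
- apply: (arith (D o1) (D o0) (D o2)
    (p := 2%:R * Sf z Y o1 o1 - 2%:R * (Sf z Y o0 o0 + Sf z Y o0 o2 + Sf z Y o2 o0 + Sf z Y o2 o2))).
    by rewrite /Sf; ring.
  by rewrite (S0 _ _ zll) !S0 ?zo // !addr0 mulr0 subrr mulr0.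
- apply: (arith (D o2) (D o0) (D o1)
    (p := 2%:R * Sf z Y o2 o2 - 2%:R * (Sf z Y o0 o0 + Sf z Y o0 o1 + Sf z Y o1 o0 + Sf z Y o1 o1))).
    by rewrite /Sf; ring.
  by rewrite (S0 _ _ zll) !S0 ?zo // !addr0 mulr0 subrr mulr0.
Qed.

Lemma not_inv_row gam (z : M) l : (forall k, z l k = c0 K) -> (forall k, z k l = c0 K) ->
  ~ jinvertible gam z.
Proof.
move=> zr zc [Y [_ [HY _]]].
have := congr1 (fun N : M => N l l) HY.
rewrite /jmul /mxscale /mxadd /mxmul /mx1 eqxx !zr !zc !mul0c !mulc0 !add0c scalec0.
exact: c0_neq_c1.
Qed.


Definition piece (S : 'I_3 -> 'I_3 -> bool) (X : M) : M :=
  fun i j => if S i j then X i j else c0 K.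
Definition SA (i j : 'I_3) := (i != o2) && (j != o2).
Definition SB (i j : 'I_3) := ((i == o2) || (j == o2)) && ((i != o1) && (j != o1)).
Definition SC (i j : 'I_3) := ((i == o1) && (j == o2)) || ((i == o2) && (j == o1)).
Definition SQ i j := SB i j || SC i j.

Lemma herm_piece gam S X : (forall i j, S i j = S j i) -> herm gam X -> herm gam (piece S X).
Proof.
move=> Ssym HX i j; rewrite /piece Ssym; case: (S j i); first exact: HX.
by rewrite conj0 !scalec0.
Qed.

Ltac funext2 := apply: functional_extensionality => ?; apply: functional_extensionality => ?.

Lemma main gam (hg : forall i, gam i != 0) (d : M -> M) : ~ inv_valued_derivation gam d.
Proof.
case=> [[Hh [Hadd [Hsc Hlb]]] [[X [HX HdX]] Hinv]].
have herm0 : herm gam (mx0 K) by move=> i j; rewrite /mx0 conj0 !scalec0.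
have d0 : d (mx0 K) = mx0 K.
  have e1 : mxscale 0 (mx0 K) = mx0 K by funext2; rewrite /mxscale /mx0 scalec0.
  have := Hsc 0 _ herm0; rewrite e1 => ->.
  by funext2; rewrite /mxscale scale0c.
have dE : forall l, d (E l) = mx0 K.
  move=> l; have HL := Hlb _ _ (hermE l hg) (hermE l hg); rewrite E_idem in HL.
  have ent : forall i j, d (E l) i j = cadd (jmul (d (E l)) (E l) i j) (jmul (E l) (d (E l)) i j).
    by move=> i j; have := congr1 (fun N : M => N i j) HL.
  case: (Hinv _ (hermE l hg)) => // Hi; exfalso; apply: (not_inv_tr (l:=l) _ _ Hi).
  - by apply: dbl; rewrite {1}ent jmulEl jmulEr eqxx !half_double.
  - move=> i j /negbTE Hi' /negbTE Hj.
    by rewrite ent jmulEl jmulEr Hi' Hj add0c scalec0 add0c.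
have dP : forall l P, herm gam P -> (forall k, P l k = c0 K) -> (forall k, P k l = c0 K) ->
    d P = mx0 K.
  move=> l P HP Pr Pc.
  have EP : jmul (E l) P = mx0 K.
    funext2; rewrite jmulEl; case: (_ == l); case: (_ == l);
    by rewrite ?Pr ?Pc ?add0c ?scalec0.
  have HL := Hlb _ _ (hermE l hg) HP; rewrite EP d0 dE in HL.
  have Z0 : jmul (mx0 K) P = mx0 K.
    by funext2; rewrite /jmul /mxscale /mxadd /mxmul /mx0 !mul0c !mulc0 !add0c scalec0.
  rewrite Z0 in HL.
  have ent : forall i j, jmul (E l) (d P) i j = c0 K.
    by move=> i j; have := congr1 (fun N : M => N i j) HL; rewrite /mxadd /mx0 add0c => <-.
  have hn : h != 0 by rewrite invr_neq0.
  case: (Hinv _ HP) => // Hi; exfalso; apply: (not_inv_row (l:=l) _ _ Hi).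
  - move=> k; case: (k =P l) => [->|/eqP/negbTE Hk].
      by have := ent l l; rewrite jmulEl eqxx half_double.
    by have := ent l k; rewrite jmulEl eqxx Hk addc0 => /(scale_eq0 hn).
  - move=> k; case: (k =P l) => [->|/eqP/negbTE Hk].
      by have := ent l l; rewrite jmulEl eqxx half_double.
    by have := ent k l; rewrite jmulEl eqxx Hk add0c => /(scale_eq0 hn).
have symA : forall i j, SA i j = SA j i by move=> i j; o3 i; o3 j.
have symB : forall i j, SB i j = SB j i by move=> i j; o3 i; o3 j.
have symC : forall i j, SC i j = SC j i by move=> i j; o3 i; o3 j.
have symQ : forall i j, SQ i j = SQ j i by move=> i j; o3 i; o3 j.
have e1 : X = mxadd (piece SA X) (piece SQ X).
  funext2; rewrite /mxadd /piece; match goal with |- _ = cadd (if SA ?i ?j then _ else _) _ => o3 i; o3 j end;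
  rewrite /= ?add0c ?addc0 //.
have e2 : piece SQ X = mxadd (piece SB X) (piece SC X).
  funext2; rewrite /mxadd /piece; match goal with |- (if SQ ?i ?j then _ else _) = _ => o3 i; o3 j end;
  rewrite /= ?add0c ?addc0 //.
have dA : d (piece SA X) = mx0 K.
  by apply: (dP o2); [exact: herm_piece | move=> k; o3 k | move=> k; o3 k].
have dB : d (piece SB X) = mx0 K.
  by apply: (dP o1); [exact: herm_piece | move=> k; o3 k | move=> k; o3 k].
have dC : d (piece SC X) = mx0 K.
  by apply: (dP o0); [exact: herm_piece | move=> k; o3 k | move=> k; o3 k].
have m00 : mxadd (mx0 K) (mx0 K) = mx0 K by funext2; rewrite /mxadd /mx0 add0c.
apply: HdX.
rewrite e1 Hadd; try exact: herm_piece.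
rewrite e2 Hadd; try exact: herm_piece.
by rewrite dA dB dC !m00.
Qed.

End Mx.

Section Alg.
Variables (F : fieldType) (a b c : F).
Notation K := (cayley_dickson a b c).
Notation T := (cT K).
Ltac dx x := case: x => [[[? ?] [? ?]] [[? ?] [? ?]]].
Ltac pairs := repeat match goal with |- (_,_) = (_,_) => congr pair end.

Definition ktau (x : T) : F := x.1.1.1.

Lemma K_tau_comm (x y : T) : ktau (cmul x y) = ktau (cmul y x).
Proof. dx x; dx y. rewrite /ktau /=. ring. Qed.
Lemma K_tau_add (x y : T) : ktau (cadd x y) = ktau x + ktau y.
Proof. by dx x; dx y. Qed.
Lemma K_tau_scale r (x : T) : ktau (cscale r x) = r * ktau x.
Proof. by dx x. Qed.
Lemma K_tau0 : ktau (c0 K) = 0. Proof. by []. Qed.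
Lemma K_tau1 : ktau (c1 K) = 1. Proof. by []. Qed.

Lemma K_add0c (x : T) : cadd (c0 K) x = x.
Proof. dx x. rewrite /=. pairs; ring. Qed.
Lemma K_addc0 (x : T) : cadd x (c0 K) = x.
Proof. dx x. rewrite /=. pairs; ring. Qed.
Lemma K_mul0c (x : T) : cmul (c0 K) x = c0 K.
Proof. dx x. rewrite /=. pairs; ring. Qed.
Lemma K_mulc0 (x : T) : cmul x (c0 K) = c0 K.
Proof. dx x. rewrite /=. pairs; ring. Qed.
Lemma K_mul1c (x : T) : cmul (c1 K) x = x.
Proof. dx x. rewrite /=. pairs; ring. Qed.
Lemma K_mulc1 (x : T) : cmul x (c1 K) = x.
Proof. dx x. rewrite /=. pairs; ring. Qed.
Lemma K_scalec0 r : cscale r (c0 K) = c0 K.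
Proof. rewrite /=. pairs; ring. Qed.
Lemma K_scale0c (x : T) : cscale 0 x = c0 K.
Proof. dx x. rewrite /=. pairs; ring. Qed.
Lemma K_conj0 : cconj (c0 K) = c0 K.
Proof. rewrite /=. pairs; ring. Qed.
Lemma K_herm1 g : g != 0 -> cscale g^-1 (cscale g (cconj (c1 K))) = c1 K.
Proof. move=> hg. rewrite /=. pairs; try ring. by field. Qed.
Lemma K_half_double (h2 : (2%:R : F) != 0) (x : T) : cscale (2%:R)^-1 (cadd x x) = x.
Proof.
have e : forall y : F, (2%:R)^-1 * (y + y) = y.
  by move=> y; field.
dx x. rewrite /=. by rewrite !e.
Qed.
Lemma K_scale_eq0 r (x : T) : r != 0 -> cscale r x = c0 K -> x = c0 K.
Proof.
move=> hr. dx x => /= H. injection H => *.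
have e : forall y : F, r * y = 0 -> y = 0.
  by move=> y /eqP; rewrite mulf_eq0 (negbTE hr) => /eqP.
pairs; apply: e => //.
Qed.
Lemma K_dbl (x : T) : x = cadd x x -> x = c0 K.
Proof.
have e : forall y : F, y = y + y -> y = 0.
  move=> y hy; have: (y + y) - y = y - y by rewrite -hy.
  by rewrite addrK subrr.
dx x => /= H. injection H => *.
pairs; apply: e => //.
Qed.
Lemma K_c0_neq_c1 : c0 K <> c1 K.
Proof. move=> /= H. injection H => e. have := (@oner_neq0 F). by rewrite -e eqxx.
Qed.
End Alg.

Theorem lemma6 (F : fieldType) (hchar2 : (2%:R : F) != 0) (hchar3 : (3%:R : F) != 0)
  (a b c : F) (ha : a != 0) (hb : b != 0) (hc : c != 0)
  (gam : 'I_3 -> F) (hgam : forall i, gam i != 0) :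
  ~ exists d : mx3 (cayley_dickson a b c) -> mx3 (cayley_dickson a b c),
      inv_valued_derivation gam d.
Proof.
case=> d Hd.
apply: (@main F (cayley_dickson a b c) (@ktau F a b c) _ _ _ _ _ _ _ _ _ _ _ _ _ _ _ _ _ _ _ hchar2 gam hgam d Hd).
all: first [exact: K_tau_comm | exact: K_tau_add | exact: K_tau_scale | exact: K_tau0 | exact: K_tau1 | exact: K_add0c | exact: K_addc0 | exact: K_mul0c | exact: K_mulc0 | exact: K_mul1c | exact: K_mulc1 | exact: K_scalec0 | exact: K_scale0c | exact: K_conj0 | exact: K_herm1 | exact: K_half_double | exact: K_scale_eq0 | exact: K_dbl | exact: K_c0_neq_c1 | exact: (K_half_double hchar2)].
Qed.
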